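(* Let $(X,A,\prec)$ be an alignment of the family $\{(X_a,\prec_a)\}_{a\in I}$ and let $\mathfrak{Q}$ be a partition of $X$ into blocks such that (i) every column $P\in\mathcal{C}(X,A)$ is contained in some block $Y\in\mathfrak{Q}$, and (ii) there is a strict partial order $\triangleleft$ on $\mathfrak{Q}$ such that for any two distinct blocks $Y',Y''$, if there are columns $P\subseteq Y'$ and $Q\subseteq Y''$ with $P\prec Q$ then $Y'\triangleleft Y''$. Define $\prec'$ on $\mathcal{C}(X,A)$ by $P\prec' Q$ if and only if either $P,Q\subseteq Y$ for some $Y\in\mathfrak{Q}$ and $P\prec Q$, or $P\subseteq Y'$, $Q\subseteq Y''$ with $Y'\triangleleft Y''$. Then $\prec'$ is a strict partial order extending $\prec$, and $(X,A,\prec')$ is an alignment of the family.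
   Context: Let $I$ be a finite index set (''rows''), and for each $a\in I$ let $(X_a,\prec_a)$ be a finite set with a strict partial order. Elements of $X_a$ are written $(a,i)$, and $X=\dot\bigcup_{a\in I}X_a$. For a simple undirected graph $(X,A)$, $\mathcal{C}(X,A)$ denotes its set of connected components (''columns''). An alignment of the family is a triple $(X,A,\prec)$ where $\prec$ is a strict partial order on $\mathcal{C}(X,A)$ such that: (P1) every $Q\in\mathcal{C}(X,A)$ induces a complete subgraph of $(X,A)$; (P2) if $(a,i)\in Q$ and $(a,j)\in Q$ then $i=j$; (P3) if $(a,i)\in P$, $(a,j)\in Q$ and $(a,i)\prec_a(a,j)$ then $P\prec Q$; (P4) if $P\prec Q$, $(a,i)\in P$ and $(a,j)\in Q$, then $(a,i)\prec_a(a,j)$ or $(a,i)$ and $(a,j)$ are incomparable w.r.t. $\prec_a$. *)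

(* Defs.v *)
From mathcomp Require Import all_boot.
Set Implicit Arguments. Unset Strict Implicit. Unset Printing Implicit Defensive.

(* The disjoint union X of the rows X_a: elements are pairs (a, i). *)
Definition elt (I : finType) (Xa : I -> finType) : finType := {a : I & Xa a}.

(* The family of row orders, assembled into one relation on X:
   x <_X y iff x = (a,i), y = (a,j) are in the same row a and (a,i) <_a (a,j). *)
Definition Xlt (I : finType) (Xa : I -> finType) (lta : forall a, rel (Xa a))
  : rel (elt Xa) :=
  fun x y => (tag x == tag y) && lta (tag x) (tagged x) (tagged_as x y).

Definition strict_po (T : Type) (D : {pred T}) (r : rel T) : Prop :=
  (forall x, x \in D -> ~~ r x x) /\
  (forall x y z, x \in D -> y \in D -> z \in D -> r x y -> r y z -> r x z).

Definition simple_graph (T : Type) (A : rel T) : Prop :=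
  (forall x, ~~ A x x) /\ (forall x y, A x y = A y x).

Definition column (T : finType) (A : rel T) (x : T) : {set T} :=
  [set y | connect A x y].
Definition columns (T : finType) (A : rel T) : {set {set T}} :=
  [set column A x | x : T].

Definition alignment (I : finType) (Xa : I -> finType)
  (lta : forall a, rel (Xa a)) (A : rel (elt Xa)) (prec : rel {set elt Xa}) : Prop :=
  strict_po (mem (columns A)) prec /\
  (forall Q, Q \in columns A -> forall x y, x \in Q -> y \in Q -> x != y -> A x y) /\
  (forall Q, Q \in columns A -> forall x y, x \in Q -> y \in Q -> tag x = tag y -> x = y) /\
  (forall P Q, P \in columns A -> Q \in columns A -> forall x y, x \in P -> y \in Q ->
     Xlt lta x y -> prec P Q) /\
  (forall P Q, P \in columns A -> Q \in columns A -> prec P Q -> forall x y,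
     x \in P -> y \in Q -> tag x = tag y ->
     Xlt lta x y || (~~ Xlt lta x y && ~~ Xlt lta y x)).

Definition prec' (T : finType) (Qs : {set {set T}}) (prec tri : rel {set T})
  : rel {set T} :=
  fun P Q =>
    ([exists Y in Qs, (P \subset Y) && (Q \subset Y)] && prec P Q) ||
    [exists Y1 in Qs, exists Y2 in Qs,
        [&& P \subset Y1, Q \subset Y2 & tri Y1 Y2]].

(* Main.v *)
Require Import Defs.
From mathcomp Require Import all_boot.

Theorem lemma6 (I : finType) (Xa : I -> finType) (lta : forall a, rel (Xa a))
  (Hlta : forall a, strict_po predT (lta a))
  (A : rel (elt Xa)) (HA : simple_graph A)
  (prec : rel {set elt Xa}) (Hal : alignment lta A prec)
  (Qs : {set {set elt Xa}}) (HQ : partition Qs [set: elt Xa])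
  (Hi : forall P, P \in columns A -> exists2 Y, Y \in Qs & P \subset Y)
  (tri : rel {set elt Xa}) (Htri : strict_po (mem Qs) tri)
  (Hii : forall Y1 Y2 P Q, Y1 \in Qs -> Y2 \in Qs -> Y1 != Y2 ->
           P \in columns A -> Q \in columns A ->
           P \subset Y1 -> Q \subset Y2 -> prec P Q -> tri Y1 Y2) :
  strict_po (mem (columns A)) (prec' Qs prec tri) /\
  (forall P Q, P \in columns A -> Q \in columns A ->
     prec P Q -> prec' Qs prec tri P Q) /\
  alignment lta A (prec' Qs prec tri).
Proof.
have tI : trivIset Qs by case/and3P: HQ.
have colin : forall x, column A x \in columns A by move=> x; apply: imset_f.
have key : forall x Y, Y \in Qs -> column A x \subset Y -> Y = pblock Qs x.
  move=> x Y YQ sY; symmetry; apply: def_pblock => //.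
  by apply: (subsetP sY); rewrite inE connect0.
have blk : forall x, pblock Qs x \in Qs /\ column A x \subset pblock Qs x.
  move=> x; have [Y YQ sY] := Hi _ (colin x).
  by rewrite -(key x Y YQ sY).
have ch : forall x y, prec' Qs prec tri (column A x) (column A y) =
   ((pblock Qs x == pblock Qs y) && prec (column A x) (column A y))
   || tri (pblock Qs x) (pblock Qs y).
  move=> x y; have [PxQ sx] := blk x; have [PyQ sy] := blk y.
  rewrite /prec'; apply/idP/idP.
    case/orP => [/andP[/existsP[Y /andP[YQ /andP[s1 s2]]] hp] |
      /existsP[Y1 /andP[Y1Q /existsP[Y2 /andP[Y2Q /and3P[s1 s2 t]]]]]].
      by rewrite -(key x Y YQ s1) -(key y Y YQ s2) eqxx hp.
    by rewrite -(key x Y1 Y1Q s1) -(key y Y2 Y2Q s2) t orbT.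
  case/orP => [/andP[/eqP e hp] | t].
    apply/orP; left; rewrite hp andbT; apply/existsP; exists (pblock Qs x).
    by rewrite PxQ sx /= e sy.
  apply/orP; right; apply/existsP; exists (pblock Qs x); rewrite PxQ /=.
  apply/existsP; exists (pblock Qs y); by rewrite PyQ sx sy t.
case: Hal => [[Hirr Htr] [P1 [P2 [P3 P4]]]].
case: Htri => [Tirr Ttr].
have ext : forall P Q, P \in columns A -> Q \in columns A ->
     prec P Q -> prec' Qs prec tri P Q.
  move=> P Q /imsetP[x _ ->] /imsetP[y _ ->] hp; rewrite ch.
  have [e|ne] := eqVneq (pblock Qs x) (pblock Qs y); first by rewrite hp.
  have [PxQ sx] := blk x; have [PyQ sy] := blk y.
  by rewrite (Hii _ _ _ _ PxQ PyQ ne (colin x) (colin y) sx sy hp) orbT.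
have spo : strict_po (mem (columns A)) (prec' Qs prec tri).
  split.
    move=> P /imsetP[x _ ->]; rewrite ch eqxx /=.
    have [PxQ _] := blk x.
    by rewrite negb_or (negbTE (Hirr _ (colin x))) (Tirr _ PxQ).
  move=> P Q R /imsetP[x _ ->] /imsetP[y _ ->] /imsetP[z _ ->]; rewrite !ch.
  have [PxQ _] := blk x; have [PyQ _] := blk y; have [PzQ _] := blk z.
  case/orP => [/andP[/eqP e1 h1] | t1]; case/orP => [/andP[/eqP e2 h2] | t2].
  - by rewrite e1 e2 eqxx (Htr _ _ _ (colin x) (colin y) (colin z) h1 h2).
  - by rewrite e1 t2 orbT.
  - by rewrite -e2 t1 orbT.
  - by rewrite (Ttr _ _ _ PxQ PyQ PzQ t1 t2) orbT.
split => //; split => //.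
split; first exact: spo.
split; first exact: P1.
split; first exact: P2.
split.
  by move=> P Q HP HQ' x y xP yQ hx; apply: ext => //; exact: (P3 P Q HP HQ' x y xP yQ hx).
move=> P Q HP HQ' hp x y xP yQ et.
case: (boolP (Xlt lta x y)) => //= nxy.
apply/negP => hyx.
have hqp := ext _ _ HQ' HP (P3 Q P HQ' HP y x yQ xP hyx).
case: spo => [sirr str]; move: (sirr P HP); rewrite (str P Q P HP HQ' HP hp hqp) //.
Qed.
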